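(* Let $k\ge2$ be a constant integer. There is a constant $C>0$ such that, with probability $1-o(1)$ as $n\to\infty$, the random $k$-tree $G(n)$ has the following property: for every path $u_hu_{h-1}\cdots u_0$ in $G(n)$ such that $u_i$ is born strictly later than $u_{i-1}$ for all $1\le i\le h$, we have $h\le C\log n$.
   Context: Random $k$-tree process: $G(0)$ is a clique on $k$ vertices (its vertices are born in round $0$); for $t\ge1$, $G(t)$ is obtained from $G(t-1)$ by choosing a $k$-clique of $G(t-1)$ uniformly at random, creating a new vertex (born in round $t$), and joining it to all vertices of the chosen clique. *)

(* Defs.v *)
From mathcomp Require Import all_boot.
From Stdlib Require Import Reals ClassicalEpsilon.

Set Implicit Arguments.
Unset Strict Implicit.
Unset Printing Implicit Defensive.

(* The initial k-clique has vertices 0..k-1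
   (born in round 0); the vertex created in round t (t >= 1) is k + t - 1.
   A history h : seq (seq nat) records the chosen k-clique of each round:
   nth [::] h t is the clique chosen in round t+1, to which vertex k + t is
   joined.  G(h) has vertex set {0, ..., k + size h - 1}. *)

Definition adj (k : nat) (h : seq (seq nat)) (x y : nat) : bool :=
  [|| [&& x < k, y < k & x != y],
      has (fun t => (y == k + t) && (x \in nth [::] h t)) (iota 0 (size h))
    | has (fun t => (x == k + t) && (y \in nth [::] h t)) (iota 0 (size h))].

Fixpoint subsk (m : nat) (s : seq nat) : seq (seq nat) :=
  match m, s with
  | 0, _ => [:: [::]]
  | m'.+1, [::] => [::]
  | m'.+1, x :: s' => map (cons x) (subsk m' s') ++ subsk m s'
  end.

Definition is_clique (k : nat) (h : seq (seq nat)) (c : seq nat) : bool :=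
  all (fun x => all (fun y => (x == y) || adj k h x y) c) c.

Definition kcliques (k : nat) (h : seq (seq nat)) : seq (seq nat) :=
  [seq c <- subsk k (iota 0 (k + size h)) | is_clique k h c].

(* distribution of the history after n rounds: list of (history, probability);
   each round picks a k-clique of the current graph uniformly at random *)
Fixpoint ktree_dist (k n : nat) : seq (seq (seq nat) * R) :=
  match n with
  | 0 => [:: ([::], 1%R)]
  | n'.+1 =>
      flatten [seq [seq (rcons hw.1 c, (hw.2 / INR (size (kcliques k hw.1)))%R)
                   | c <- kcliques k hw.1] | hw <- ktree_dist k n']
  end.

Definition indic (P : Prop) : R :=
  if excluded_middle_informative P then 1%R else 0%R.

Definition ktree_prob (k n : nat) (P : seq (seq nat) -> Prop) : R :=
  foldr (fun hw acc => (hw.2 * indic (P hw.1) + acc)%R) 0%R (ktree_dist k n).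

Definition birth (k v : nat) : nat := if v < k then 0 else v - k + 1.

(* p = [:: u_0; u_1; ...; u_h] is a path u_h u_(h-1) ... u_0 in G(h)
   (distinct vertices of G(h), consecutive ones adjacent) with u_i born
   strictly later than u_(i-1) for all i. *)
Definition birth_increasing_path (k : nat) (h : seq (seq nat)) (p : seq nat) : Prop :=
  [/\ p != [::], uniq p, all (fun v => v < k + size h) p,
      path (adj k h) (head 0 p) (behead p)
    & sorted (fun a b => birth k a < birth k b) p].

(* Main.v *)
Require Import Defs.
From mathcomp Require Import all_boot zify.
From Stdlib Require Import Reals Lra.
Set Warnings "-notation-overridden".

Lemma size_subsk j s : size (subsk j s) = 'C(size s, j).
Proof.
elim: s j => [|x s IH] [|j] //=.
by rewrite size_cat size_map !IH binS addnC.
Qed.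

Lemma mem_subsk j s l : l \in subsk j s -> subseq l s && (size l == j).
Proof.
elim: s j l => [|x s IH] [|j] l //=; rewrite ?inE.
- by move/eqP->.
- by move/eqP->.
- rewrite mem_cat => /orP[/mapP[l' Hl' ->]|H].
    by have /andP[H1 H2] := IH _ _ Hl'; rewrite /= eqxx H1.
  have /andP[H1 H2] := IH _ _ H; rewrite H2 andbT.
  case: l H H1 H2 => //= y l _ H1 _.
  case: ifP => _; first exact: (cons_subseq H1).
  exact: H1.
Qed.

Lemma subsk_mem s l : subseq l s -> l \in subsk (size l) s.
Proof.
elim: s l => [|x s IH] [|y l] //=; rewrite ?inE //.
case: ifP => [/eqP-> Hs|_ Hs]; rewrite mem_cat.
    by rewrite (map_f (cons x) (IH _ Hs)).
  by rewrite (IH (y :: l) Hs) orbT.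
Qed.

Lemma subsk0 s : subsk 0 s = [:: [::]].
Proof. by case: s. Qed.

Lemma subsk_rcons j s x :
  perm_eq (subsk j.+1 (rcons s x)) (subsk j.+1 s ++ map (rcons^~ x) (subsk j s)).
Proof.
elim: s j => [|a s IH] j.
  by case: j.
case: j => [|j] /=.
  rewrite !subsk0 /= perm_cons.
  by have := IH 0; rewrite subsk0.
rewrite map_cat -catA.
apply: perm_trans (perm_cat (perm_map _ (IH j)) (IH j.+1)) _.
rewrite !map_cat -!catA perm_cat2l perm_catCA perm_cat2l -!map_comp.
by rewrite (@eq_map _ _ (cons a \o rcons^~ x) (rcons^~ x \o cons a)).
Qed.

Lemma filter_subsk (c : seq nat) j s :
  [seq l <- subsk j s | all (mem c) l] = subsk j [seq x <- s | x \in c].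
Proof.
elim: s j => [|x s IH] [|j] //=; first by rewrite subsk0.
rewrite filter_cat filter_map IH /=.
case: ifP => Hx /=.
  by congr (_ ++ _); congr map; rewrite -IH; apply: eq_filter => l /=; rewrite /preim /= Hx.
rewrite (_ : [seq i <- _ | _] = [::]) //.
by apply/eqP; rewrite -[_ == _]negbK -has_filter; apply/hasPn => l _; rewrite /preim /= Hx.
Qed.

Lemma adj_rcons k h c x y : adj k (rcons h c) x y =
  [|| adj k h x y, (y == k + size h) && (x \in c) | (x == k + size h) && (y \in c)].
Proof.
rewrite /adj size_rcons -[(size h).+1]addn1 iotaD !has_cat /= add0n !nth_rcons ltnn eqxx !orbF.
have E : forall (P : nat -> seq nat -> bool), has (fun t => P t (nth [::] (rcons h c) t)) (iota 0 (size h))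
   = has (fun t => P t (nth [::] h t)) (iota 0 (size h)).
  move=> P; apply: eq_in_has => t; rewrite mem_iota add0n => /andP[_ Ht].
  by rewrite nth_rcons Ht.
rewrite (E (fun t l => (y == k + t) && (x \in l))) (E (fun t l => (x == k + t) && (y \in l))).
by case: [&& _, _ & _]; case: has; case: has; case: (_ && _); case: (_ && _).
Qed.

Definition Inv k (h : seq (seq nat)) :=
  forall t, t < size h -> all (fun x => x < k + t) (nth [::] h t).

Lemma Inv_rcons k h c : Inv k h -> all (fun x => x < k + size h) c -> Inv k (rcons h c).
Proof.
move=> Ih Hc t; rewrite size_rcons ltnS leq_eqVlt => /orP[/eqP->|Ht].
  by rewrite nth_rcons ltnn eqxx.
by rewrite nth_rcons Ht; apply: Ih.
Qed.

Lemma Inv_rconsK k h c : Inv k (rcons h c) -> Inv k h /\ all (fun x => x < k + size h) c.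
Proof.
move=> I; split.
  move=> t Ht; have := I t; rewrite size_rcons nth_rcons Ht ltnS; apply; exact: ltnW.
by have := I (size h); rewrite size_rcons nth_rcons ltnn eqxx; apply.
Qed.

Lemma adj_top k h y : Inv k h -> adj k h (k + size h) y = false.
Proof.
move=> I; rewrite /adj.
have -> : (k + size h < k) = false by apply/negbTE; rewrite -leqNgt leq_addr.
rewrite /=; apply/norP; split; apply/hasPn => t; rewrite mem_iota add0n => /andP[_ Ht].
  apply/negP => /andP[_ Hm]; have /allP := I t Ht => /(_ _ Hm).
  by rewrite ltn_add2l ltnNge ltnW.
by rewrite eqn_add2l eq_sym (ltn_eqF Ht).
Qed.

Lemma clique_old k h c l : all (fun x => x < k + size h) l ->
  is_clique k (rcons h c) l = is_clique k h l.
Proof.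
move=> /allP Hl; rewrite /is_clique; apply: eq_in_all => x Hx; apply: eq_in_all => y Hy.
rewrite adj_rcons (ltn_eqF (Hl _ Hx)) (ltn_eqF (Hl _ Hy)) /=.
by rewrite !orbF.
Qed.

Lemma clique_new k h c l : Inv k h -> all (fun x => x < k + size h) l ->
  is_clique k (rcons h c) (rcons l (k + size h)) -> all (mem c) l.
Proof.
move=> I /allP Hl /allP Hc; apply/allP => y Hy.
have Hm : k + size h \in rcons l (k + size h) by rewrite mem_rcons inE eqxx.
have Hy' : y \in rcons l (k + size h) by rewrite mem_rcons inE Hy orbT.
have /allP := Hc _ Hm => /(_ y Hy').
rewrite adj_rcons adj_top // eq_sym (ltn_eqF (Hl _ Hy)) /= eqxx /=; done.
Qed.

Lemma clique_sub_new k h c l : is_clique k h c -> {subset l <= c} ->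
  is_clique k (rcons h c) (rcons l (k + size h)).
Proof.
move=> /allP Hc Hsub; apply/allP => x; rewrite mem_rcons inE => Hx.
apply/allP => y; rewrite mem_rcons inE => Hy.
case/orP: Hx => [/eqP->|Hx]; case/orP: Hy => [/eqP->|Hy].
- by rewrite eqxx.
- by rewrite adj_rcons eqxx (Hsub _ Hy) !orbT.
- by rewrite adj_rcons eqxx (Hsub _ Hx) !orbT.
have /allP := Hc _ (Hsub _ Hx) => /(_ _ (Hsub _ Hy)) /orP[->//|H].
by rewrite adj_rcons H orbT.
Qed.

Lemma mem_kcliques k h c : c \in kcliques k h ->
  [/\ subseq c (iota 0 (k + size h)), size c = k & is_clique k h c].
Proof.
rewrite mem_filter => /andP[Hcl /mem_subsk /andP[H1 /eqP H2]]; by split.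
Qed.

Definition dl k (h : seq (seq nat)) : seq nat :=
  foldl (fun d c => rcons d (\max_(u <- c) nth 0 d u).+1) (nseq k 0) h.

Definition Dc k h (c : seq nat) := \max_(u <- c) nth 0 (dl k h) u.

Lemma dl_rcons k h c : dl k (rcons h c) = rcons (dl k h) (Dc k h c).+1.
Proof. by rewrite /dl foldl_rcons. Qed.

Lemma size_dl k h : size (dl k h) = k + size h.
Proof.
elim/last_ind: h => [|h c IH]; first by rewrite /dl /= size_nseq addn0.
by rewrite dl_rcons !size_rcons IH addnS.
Qed.

Lemma dep_rcons k h c v : v < k + size h ->
  nth 0 (dl k (rcons h c)) v = nth 0 (dl k h) v.
Proof. by rewrite dl_rcons nth_rcons size_dl => ->. Qed.

Lemma dep_top k h c : nth 0 (dl k (rcons h c)) (k + size h) = (Dc k h c).+1.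
Proof. by rewrite dl_rcons nth_rcons size_dl ltnn eqxx. Qed.

Lemma Dc_rcons k h c l : all (fun x => x < k + size h) l ->
  Dc k (rcons h c) l = Dc k h l.
Proof.
move=> /allP Hl; rewrite /Dc big_seq_cond [RHS]big_seq_cond.
by apply: eq_bigr => u /andP[Hu _]; rewrite dep_rcons // Hl.
Qed.

Lemma dep_struct k h t : Inv k h -> t < size h ->
  nth 0 (dl k h) (k + t) = (Dc k h (nth [::] h t)).+1.
Proof.
elim/last_ind: h t => [|h c IH] t //.
move=> /Inv_rconsK [I Hc]; rewrite size_rcons ltnS leq_eqVlt => /orP[/eqP->|Ht].
  rewrite dep_top nth_rcons ltnn eqxx Dc_rcons //.
rewrite dep_rcons ?ltn_add2l // IH // nth_rcons Ht Dc_rcons //.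
apply: sub_all (I t Ht) => x Hx; apply: (leq_trans Hx); rewrite leq_add2l ltnW //.
Qed.

Lemma birth_mono k a b : a <= b -> birth k a <= birth k b.
Proof.
rewrite /birth; case: ifP => Ha; case: ifP => Hb; lia.
Qed.

Lemma dep_step k h x y : Inv k h -> adj k h x y -> birth k x < birth k y ->
  y < k + size h -> nth 0 (dl k h) x < nth 0 (dl k h) y.
Proof.
move=> I; rewrite /adj => /or3P[/and3P[Hx Hy _]|/hasP[t]|/hasP[t]].
- by rewrite /birth Hx Hy.
- rewrite mem_iota add0n => /andP[_ Ht] /andP[/eqP-> Hxt] _ _.
  rewrite dep_struct // ltnS /Dc.
  by apply: (@leq_bigmax_seq _ _ xpredT (fun u => nth 0 (dl k h) u) _ Hxt).
- rewrite mem_iota add0n => /andP[_ Ht] /andP[/eqP-> Hyt].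
  have /allP := I t Ht => /(_ _ Hyt) /ltnW /(birth_mono k).
  by rewrite leqNgt => /negbTE->.
Qed.

Lemma path_dep k h x q : Inv k h -> path (adj k h) x q ->
  path (fun a b => birth k a < birth k b) x q ->
  all (fun v => v < k + size h) q ->
  nth 0 (dl k h) x + size q <= nth 0 (dl k h) (last x q).
Proof.
move=> I; elim: q x => [|y q IH] x /=; first by rewrite addn0.
move=> /andP[Hxy Hp] /andP[Bxy Bp] /andP[Hy Hq].
have Hd := dep_step k h x y I Hxy Bxy Hy.
apply: leq_trans (IH y Hp Bp Hq); rewrite addnS -addSn leq_add2r //.
Qed.

Definition Phi k h := \sum_(c <- kcliques k h) expn 2 (Dc k h c).
Definition Vs k h := \sum_(d <- dl k h) expn 2 d.
Definition psi k h := Phi k h + Vs k h.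
Definition Nk k h := size (kcliques k h).

Lemma leq_sum_seq (I : eqType) (r : seq I) (E1 E2 : I -> nat) :
  (forall i, i \in r -> E1 i <= E2 i) ->
  \sum_(i <- r) E1 i <= \sum_(i <- r) E2 i.
Proof.
move=> H; rewrite big_seq [X in _ <= X]big_seq; apply: leq_sum => i; exact: H.
Qed.

Lemma subsk_lt j m l : l \in subsk j (iota 0 m) -> all (fun x => x < m) l.
Proof.
move=> /mem_subsk /andP[Hs _]; apply/allP => x /(mem_subseq Hs).
by rewrite mem_iota add0n.
Qed.

Lemma iotaSr m : iota 0 m.+1 = rcons (iota 0 m) m.
Proof. by rewrite -addn1 iotaD cats1. Qed.

Lemma kcl_split k' h c (F : seq nat -> nat) :
  let m := k'.+1 + size h in
  let Q' := is_clique k'.+1 (rcons h c) in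
  \sum_(l <- kcliques k'.+1 (rcons h c)) F l =
  \sum_(l <- subsk k'.+1 (iota 0 m) | Q' l) F l +
  \sum_(l <- subsk k' (iota 0 m) | Q' (rcons l m)) F (rcons l m).
Proof.
move=> m Q'; rewrite /kcliques big_filter size_rcons addnS iotaSr.
by rewrite (perm_big _ (subsk_rcons _ _ _)) big_cat big_map.
Qed.

Lemma kcl_count k' h c :
  let m := k'.+1 + size h in
  let Q' := is_clique k'.+1 (rcons h c) in
  Nk k'.+1 (rcons h c) =
  count Q' (subsk k'.+1 (iota 0 m)) + count (fun l => Q' (rcons l m)) (subsk k' (iota 0 m)).
Proof.
move=> m Q'; rewrite /Nk /kcliques size_filter size_rcons addnS iotaSr.
by rewrite (permP (subsk_rcons _ _ _)) count_cat count_map.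
Qed.

Lemma Dc_sub k h l c : {subset l <= c} -> Dc k h l <= Dc k h c.
Proof.
move=> Hs; apply/bigmax_leqP_seq => u Hu _.
exact: (@leq_bigmax_seq _ _ xpredT (fun u => nth 0 (dl k h) u) _ (Hs _ Hu)).
Qed.

Lemma Phi_step k' h c : Inv k'.+1 h -> c \in kcliques k'.+1 h ->
  Phi k'.+1 (rcons h c) <= Phi k'.+1 h + k'.+1 * expn 2 (Dc k'.+1 h c).+1.
Proof.
move=> I Hc; have [Hcs Hsz Hcl] := @mem_kcliques _ _ _ Hc.
rewrite /Phi kcl_split; apply: leq_add.
  rewrite /kcliques big_filter big_seq_cond [X in _ <= X]big_seq_cond.
  apply: eq_leq; apply: eq_big => [l|l /andP[Hl _]].
    case Hl: (l \in subsk k'.+1 (iota 0 (k'.+1 + size h))); last by [].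
    by rewrite !andTb clique_old // (@subsk_lt _ _ _ Hl).
  by rewrite Dc_rcons // (@subsk_lt _ _ _ Hl).
set m := k'.+1 + size h.
apply: (@leq_trans (\sum_(l <- subsk k' (iota 0 m) | all (mem c) l) expn 2 (Dc k'.+1 h c).+1)).
  rewrite big_seq_cond [X in _ <= X]big_seq_cond big_mkcond [X in _ <= X]big_mkcond.
  apply: leq_sum_seq => l Hl; rewrite Hl !andTb.
  case Q: (is_clique _ _ _) => //.
  have Hlt := @subsk_lt _ _ _ Hl.
  have Hm := @clique_new _ _ _ _ I Hlt Q; rewrite Hm leq_exp2l //.
  rewrite /Dc big_rcons /= dep_top geq_max leqnn andbT.
  rewrite -/(Dc k'.+1 (rcons h c) l) Dc_rcons //.
  apply: leqW; apply: (@Dc_sub _ _ _ c).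
  by move=> u /(allP Hm).
rewrite big_const_seq iter_addn_0.
rewrite mulnC leq_mul2r; apply/orP; right.
rewrite -size_filter filter_subsk size_subsk.
apply: (@leq_trans 'C(size c, k')); last by rewrite Hsz binSn.
apply: leq_bin2l; apply: uniq_leq_size; first exact: filter_uniq (iota_uniq _ _).
by move=> x; rewrite mem_filter => /andP[].
Qed.

Lemma Vs_rcons k h c : Vs k (rcons h c) = Vs k h + expn 2 (Dc k h c).+1.
Proof. by rewrite /Vs dl_rcons big_rcons /= addnC. Qed.

Lemma psi_step k' h c : Inv k'.+1 h -> c \in kcliques k'.+1 h ->
  psi k'.+1 (rcons h c) <= psi k'.+1 h + k'.+2 * expn 2 (Dc k'.+1 h c).+1.
Proof.
move=> I Hc; rewrite /psi Vs_rcons mulSn.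
have := @Phi_step _ _ _ I Hc; lia.
Qed.

Lemma sum_psi k' h : Inv k'.+1 h ->
  \sum_(c <- kcliques k'.+1 h) psi k'.+1 (rcons h c) <=
  Nk k'.+1 h * psi k'.+1 h + k'.+2 * 2 * Phi k'.+1 h.
Proof.
move=> I.
apply: (@leq_trans (\sum_(c <- kcliques k'.+1 h) (psi k'.+1 h + k'.+2 * expn 2 (Dc k'.+1 h c).+1))).
  by apply: leq_sum_seq => c Hc; apply: (@psi_step _ _ _ I Hc).
rewrite big_split /= big_const_seq iter_addn_0 mulnC /Nk count_predT leq_add2l.
rewrite /Phi big_distrr /= leq_eqVlt; apply/orP; left; apply/eqP; apply: eq_bigr => c _.
by rewrite expnS mulnA.
Qed.

Lemma kcl_all k h c : c \in kcliques k h -> all (fun x => x < k + size h) c.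
Proof.
move=> /mem_kcliques [Hs _ _]; apply/allP => x /(mem_subseq Hs).
by rewrite mem_iota add0n.
Qed.

Lemma Nk_step k' h c : Inv k'.+1 h -> c \in kcliques k'.+1 h ->
  Nk k'.+1 h < Nk k'.+1 (rcons h c).
Proof.
move=> I Hc; have [Hcs Hsz Hcl] := @mem_kcliques _ _ _ Hc.
rewrite kcl_count.
have -> : count (is_clique k'.+1 (rcons h c)) (subsk k'.+1 (iota 0 (k'.+1 + size h))) = Nk k'.+1 h.
  rewrite /Nk /kcliques size_filter; apply: eq_in_count => l Hl.
  by rewrite clique_old // (@subsk_lt _ _ _ Hl).
rewrite -addn1 leq_add2l -has_count; apply/hasP; exists (behead c).
  have Hb : subseq (behead c) (iota 0 (k'.+1 + size h)).
    apply: (subseq_trans _ Hcs).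
    by case: (c) => //= x s; exact: subseq_cons.
  by have := @subsk_mem _ _ Hb; rewrite size_behead Hsz.
apply: (@clique_sub_new _ _ _ _ Hcl); exact: mem_behead.
Qed.

Lemma Nk0 k : 0 < Nk k [::].
Proof.
rewrite /Nk /kcliques size_filter -has_count; apply/hasP; exists (iota 0 k).
  by have := @subsk_mem (iota 0 k) (iota 0 k) (subseq_refl _); rewrite size_iota addn0.
apply/allP => x Hx; apply/allP => y Hy.
move: Hx Hy; rewrite !mem_iota !add0n /adj => /andP[_ Hx] /andP[_ Hy].
by case: eqP => //= Hxy; rewrite Hx Hy /=; apply/eqP.
Qed.

Section RPart.
Local Open Scope R_scope.

Definition sumL {A : Type} (l : seq A) (g : A -> R) : R :=
  foldr (fun x acc => g x + acc) 0 l.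

Lemma sumL_nil {A} (g : A -> R) : sumL [::] g = 0.
Proof. by []. Qed.
Lemma sumL_cons {A} x (l : seq A) g : sumL (x :: l) g = g x + sumL l g.
Proof. by []. Qed.

Lemma sumL_cat {A} (l1 l2 : seq A) g : sumL (l1 ++ l2) g = sumL l1 g + sumL l2 g.
Proof. elim: l1 => [|x l IH]; rewrite /= ?sumL_nil ?sumL_cons; [lra|]. rewrite IH; lra. Qed.

Lemma sumL_flatten {A B} (l : seq A) (f : A -> seq B) g :
  sumL (flatten (map f l)) g = sumL l (fun x => sumL (f x) g).
Proof. elim: l => [|x l IH] //=. rewrite sumL_cat IH //. Qed.

Lemma sumL_map {A B} (l : seq A) (f : A -> B) g : sumL (map f l) g = sumL l (fun x => g (f x)).
Proof. elim: l => [|x l IH] //. exact: (congr1 (Rplus (g (f x))) IH). Qed.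

Lemma sumL_le {A} (l : seq A) g g' : (forall x, List.In x l -> g x <= g' x) -> sumL l g <= sumL l g'.
Proof.
elim: l => [|x l IH] H; rewrite ?sumL_nil ?sumL_cons; first lra.
apply: Rplus_le_compat; first by apply: H; left.
by apply: IH => y Hy; apply: H; right.
Qed.

Lemma sumL_scal {A} (l : seq A) a g : sumL l (fun x => a * g x) = a * sumL l g.
Proof. elim: l => [|x l IH]; rewrite ?sumL_nil ?sumL_cons; [lra|]. rewrite IH; lra. Qed.

Lemma sumL_add {A} (l : seq A) g g' : sumL l (fun x => g x + g' x) = sumL l g + sumL l g'.
Proof. elim: l => [|x l IH]; rewrite ?sumL_nil ?sumL_cons; [lra|]. rewrite IH; lra. Qed.

Lemma sumL_INR {A} (l : seq A) (f : A -> nat) : sumL l (fun x => INR (f x)) = INR (\sum_(x <- l) f x).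
Proof.
elim: l => [|x l IH]; first by rewrite big_nil.
rewrite big_cons sumL_cons IH plus_INR //.
Qed.

Lemma sumL_const {A} (l : seq A) a : sumL l (fun _ => a) = INR (size l) * a.
Proof.
elim: l => [|x l IH]; first by rewrite sumL_nil /=; lra.
rewrite sumL_cons IH. change (size (x :: l)) with (size l).+1. rewrite S_INR; lra.
Qed.

Lemma In_flatten {A B} (l : seq A) (f : A -> seq B) y :
  List.In y (flatten (map f l)) -> exists x, List.In x l /\ List.In y (f x).
Proof.
elim: l => [|x l IH] //= H0; case: (List.in_app_or _ _ _ H0) => H.
  by exists x; split => //; left.
by have [z [Hz Hy]] := IH H; exists z; split => //; right.
Qed.

Lemma In_map {A B} (l : seq A) (f : A -> B) y :
  List.In y (map f l) -> exists x, List.In x l /\ y = f x.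
Proof.
elim: l => [|x l IH] //= [H|H]; first by exists x; split => //; left.
by have [z [Hz Hy]] := IH H; exists z; split => //; right.
Qed.

Lemma In_mem (T : eqType) (x : T) s : List.In x s -> x \in s.
Proof.
elim: s => [|y s IH] //= [->|H]; first by rewrite inE eqxx.
by rewrite inE IH ?orbT.
Qed.

Lemma sumL_ext_in {A} (l : seq A) f g : (forall x, List.In x l -> f x = g x) -> sumL l f = sumL l g.
Proof.
elim: l => [|x l IH] H //; rewrite !sumL_cons H; last by left.
by rewrite IH // => y Hy; apply: H; right.
Qed.

Lemma dist_step k n g : sumL (ktree_dist k n.+1) g =
  sumL (ktree_dist k n) (fun hw => sumL (kcliques k hw.1)
     (fun c => g (rcons hw.1 c, hw.2 / INR (size (kcliques k hw.1))))).
Proof.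
rewrite /= sumL_flatten; apply: sumL_ext_in => hw _; exact: sumL_map.
Qed.

Lemma supp k' n hw : List.In hw (ktree_dist k'.+1 n) ->
  [/\ size hw.1 = n, Inv k'.+1 hw.1, 0 <= hw.2 & (n < Nk k'.+1 hw.1)%nat].
Proof.
elim: n hw => [|n IH] hw.
  move=> [<-|[]] /=; split => //; [lra| exact: Nk0].
move=> H0; have [[h w] [Hin H1]] := @In_flatten _ _ _ _ _ H0.
have [c [Hc ->]] := @In_map _ _ _ _ _ H1; rewrite /=.
have [Hs I Hw HN] := IH _ Hin; rewrite /= in Hs I Hw HN.
have Hc' := @In_mem _ _ _ Hc.
split.
- by rewrite size_rcons Hs.
- by apply: Inv_rcons => //; apply: kcl_all.
- apply: Rmult_le_pos => //; apply: Rlt_le; apply: Rinv_0_lt_compat.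
  apply: lt_0_INR; apply/ltP; apply: leq_ltn_trans HN.
  done.
- apply: leq_trans (@Nk_step _ _ _ I Hc'); by rewrite ltnS.
Qed.

Lemma mass k' n : sumL (ktree_dist k'.+1 n) (fun hw => hw.2) = 1.
Proof.
elim: n => [|n IH]; first by rewrite /= /sumL /=; lra.
rewrite dist_step -IH; apply: sumL_ext_in => [[h w] Hin] /=.
have [_ _ _ HN] := @supp _ _ _ Hin; rewrite /= in HN.
rewrite sumL_const; field.
apply: not_0_INR => H; by rewrite /Nk H in HN.
Qed.

Definition Ex k n := sumL (ktree_dist k n) (fun hw => hw.2 * INR (psi k hw.1)).

Lemma real_step w N m P F a : 0 <= w -> 0 < m -> m <= N -> 0 <= F <= P -> 0 <= a ->
  w / N * (N * P + a * F) <= (1 + a / m) * (w * P).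
Proof.
move=> Hw Hm HmN [HF HFP] Ha.
have HN : 0 < N by lra.
have -> : w / N * (N * P + a * F) = w * P + (w * a) * (F / N) by field; lra.
have -> : (1 + a / m) * (w * P) = w * P + (w * a) * (P / m) by field; lra.
apply: Rplus_le_compat_l; apply: Rmult_le_compat_l; first nra.
apply: Rle_trans (_ : P / N <= _).
  by apply: Rmult_le_compat_r => //; apply: Rlt_le; apply: Rinv_0_lt_compat.
apply: Rmult_le_compat_l; first lra.
by apply: Rinv_le_contravar.
Qed.

Lemma Ex_step k' n : Ex k'.+1 n.+1 <= (1 + INR (k'.+2 * 2) / INR n.+1) * Ex k'.+1 n.
Proof.
rewrite /Ex dist_step -sumL_scal; apply: sumL_le => [[h w] Hin].
simpl fst; simpl snd.
have [Hs I Hw HN] := @supp _ _ _ Hin; rewrite /= in Hs I Hw HN.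
rewrite sumL_scal sumL_INR.
apply: Rle_trans (_ : w / INR (Nk k'.+1 h) * INR (Nk k'.+1 h * psi k'.+1 h + k'.+2 * 2 * Phi k'.+1 h) <= _).
  apply: Rmult_le_compat_l.
    apply: Rmult_le_pos => //; apply: Rlt_le; apply: Rinv_0_lt_compat.
    apply: lt_0_INR; apply/ltP; exact: leq_ltn_trans HN.
  apply: le_INR; apply/leP; exact: sum_psi.
rewrite plus_INR (mult_INR (Nk _ _)) (mult_INR (k'.+2 * 2)).
apply: (real_step _ _ (INR n.+1)) => //.
- by apply: lt_0_INR; apply/ltP.
- by apply: le_INR; apply/leP.
- split; first exact: pos_INR.
  by apply: le_INR; apply/leP; rewrite /psi leq_addr.
- exact: pos_INR.
Qed.

Lemma bernoulli x n : 0 <= x -> 1 + INR n * x <= (1 + x) ^ n.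
Proof.
move=> Hx; elim: n => [|n IH]; first by simpl; lra.
rewrite S_INR [(1 + x) ^ n.+1]/=.
have := pos_INR n => Hn.
nra.
Qed.

Lemma pow_step A m : 0 < m -> (1 + INR A / m) * m ^ A <= (m + 1) ^ A.
Proof.
move=> Hm.
have -> : m + 1 = m * (1 + / m) by field; lra.
rewrite Rpow_mult_distr.
have Hb := bernoulli (/ m) A (Rlt_le _ _ (Rinv_0_lt_compat _ Hm)).
have Hp : 0 < m ^ A by apply: pow_lt.
have -> : (1 + INR A / m) * m ^ A = m ^ A * (1 + INR A * / m) by field; lra.
by apply: Rmult_le_compat_l => //; lra.
Qed.

Lemma Ex_bound k' n : Ex k'.+1 n <= INR (psi k'.+1 [::]) * (INR n + 1) ^ (k'.+2 * 2).
Proof.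
elim: n => [|n IH].
  rewrite /Ex /= /sumL /= Rplus_0_l pow1; lra.
apply: Rle_trans (Ex_step _ _) _.
have Hm : 0 < INR n.+1 by apply: lt_0_INR; apply/ltP.
have Hpos : 0 <= 1 + INR (k'.+2 * 2) / INR n.+1.
  have := pos_INR (k'.+2 * 2) => H; apply: Rlt_le; apply: Rplus_lt_le_0_compat; first lra.
  by apply: Rmult_le_pos => //; apply: Rlt_le; apply: Rinv_0_lt_compat.
apply: Rle_trans (Rmult_le_compat_l _ _ _ Hpos IH) _.
rewrite -S_INR.
have H := pow_step (k'.+2 * 2) (INR n.+1) Hm.
have Hk := pos_INR (psi k'.+1 [::]).
rewrite S_INR in H *.
nra.
Qed.

Lemma INR_expn2 m : INR (expn 2 m) = 2 ^ m.
Proof.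
elim: m => [|m IH]; first by rewrite expn0 /=.
by rewrite expnS mult_INR IH /=.
Qed.

Lemma leq_sum_mem (s : seq nat) (F : nat -> nat) x : x \in s -> (F x <= \sum_(y <- s) F y)%nat.
Proof.
elim: s => [|y s IH] //; rewrite inE big_cons => /orP[/eqP->|H]; first exact: leq_addr.
by apply: leq_trans (IH H) _; apply: leq_addl.
Qed.

Lemma bad_psi k' h p : Inv k'.+1 h -> birth_increasing_path k'.+1 h p ->
  2 ^ (size p).-1 <= INR (psi k'.+1 h).
Proof.
move=> I [Hp _ Hall Hpath Hsort].
case: p Hp Hall Hpath Hsort => [|x q] // _ /= /andP[Hx Hq] Hpath Hsort.
have Hd := path_dep _ _ _ _ I Hpath Hsort Hq.
have Hl : (last x q < k'.+1 + size h)%nat.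
  by case: (lastP q) Hq => [|q' y] //; rewrite last_rcons => /allP; apply; rewrite mem_rcons inE eqxx.
rewrite -INR_expn2; apply: le_INR; apply/leP.

apply: (@leq_trans (expn 2 (nth 0 (dl k'.+1 h) (last x q)))%nat).
  by rewrite leq_exp2l //; apply: leq_trans Hd; apply: leq_addl.
rewrite /psi; apply: leq_trans (leq_addl _ _); rewrite /Vs.
apply: (leq_sum_mem (dl k'.+1 h) (fun d => expn 2%nat d)).
by apply: mem_nth; rewrite size_dl.
Qed.

Lemma good_indic k' n h (C T : R) :
  size h = n -> Inv k'.+1 h -> 0 < T ->
  (forall L : nat, C * ln (INR n) < INR L -> T <= 2 ^ L) ->
  1 - INR (psi k'.+1 h) / T <=
  indic (forall p : seq nat, birth_increasing_path k'.+1 h p ->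
              (INR (size p).-1 <= C * ln (INR n))%R).
Proof.
move=> Hs I HT HL.
have Hps := pos_INR (psi k'.+1 h).
have Hq : 0 <= INR (psi k'.+1 h) / T.
  by apply: Rmult_le_pos => //; apply: Rlt_le; apply: Rinv_0_lt_compat.
rewrite /indic; case: ClassicalEpsilon.excluded_middle_informative => H /=; first lra.
case: (Rle_lt_dec T (INR (psi k'.+1 h))) => HT2.
  have : 1 <= INR (psi k'.+1 h) / T.
    apply: (Rmult_le_reg_r T) => //; rewrite /Rdiv Rmult_assoc Rinv_l; lra.
  lra.
exfalso; apply: H => p Hp.
case: (Rle_lt_dec (INR (size p).-1) (C * ln (INR n))) => // Hlt.
have := HL _ Hlt; have := bad_psi _ _ _ I Hp; lra.
Qed.

Lemma proposition5_aux (k : nat) (hk : (2 <= k)%nat) :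
  exists C : R, (0 < C)%R /\
    forall eps : R, (0 < eps)%R ->
      exists N : nat, forall n : nat, (N <= n)%nat ->
        (1 - eps <= ktree_prob k n
           (fun h => forall p : seq nat, birth_increasing_path k h p ->
              (INR (size p).-1 <= C * ln (INR n))%R))%R.
Proof.
case: k hk => [|k'] // hk.
pose A := (k'.+2 * 2)%nat.
pose K := INR (psi k'.+1 [::]).
have Hln2 : 0 < ln 2 by have := ln_lt_2; lra.
have HA : 0 < INR A.+1 by apply: lt_0_INR; apply/ltP.
exists (INR A.+1 / ln 2); split.
  by apply: Rmult_lt_0_compat => //; apply: Rinv_0_lt_compat.
move=> eps Heps.
have [N0 HN0] := INR_unbounded (K * 2 ^ A / eps).
exists N0.+1 => n Hn.
have HnN : INR N0 <= INR n by apply: le_INR; apply/leP; apply: ltnW.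
have Hn1 : 1 <= INR n by rewrite -/(INR 1); apply: le_INR; apply/leP; apply: leq_trans Hn.
have HK : 0 <= K by apply: pos_INR.
pose T := INR n ^ A.+1.
have HnA : 0 < INR n ^ A by apply: pow_lt; lra.
have HT : 0 < T by apply: pow_lt; lra.
have HL : forall L : nat, INR A.+1 / ln 2 * ln (INR n) < INR L -> T <= 2 ^ L.
  move=> L HLt; apply: Rlt_le; apply: ln_lt_inv => //; first by apply: pow_lt; lra.
  rewrite !ln_pow; try lra.
  have -> : INR A.+1 * ln (INR n) = (INR A.+1 / ln 2 * ln (INR n)) * ln 2 by field; lra.
  by apply: Rmult_lt_compat_r.
have HEx : Ex k'.+1 n <= eps * T.
  apply: Rle_trans (Ex_bound k' n) _.
  have H1 : (INR n + 1) ^ A <= (2 * INR n) ^ A by apply: pow_incr; lra.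
  rewrite Rpow_mult_distr in H1.
  have H2 : K * 2 ^ A <= eps * INR n.
    have : K * 2 ^ A / eps < INR n by lra.
    move=> H; apply: Rlt_le.
    have -> : K * 2 ^ A = (K * 2 ^ A / eps) * eps by field; lra.
    by rewrite Rmult_comm; apply: Rmult_lt_compat_l.
  have H3 : 0 <= 2 ^ A by apply: pow_le; lra.
  rewrite /T /= -/K.
  apply: Rle_trans (_ : K * (2 ^ A * INR n ^ A) <= _).
    by apply: Rmult_le_compat_l.
  have -> : K * (2 ^ A * INR n ^ A) = (K * 2 ^ A) * INR n ^ A by ring.
  have -> : eps * (INR n * INR n ^ A) = (eps * INR n) * INR n ^ A by ring.
  by apply: Rmult_le_compat_r => //; lra.
apply: Rle_trans (_ : 1 - eps <= sumL (ktree_dist k'.+1 n)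
          (fun hw => hw.2 * (1 - INR (psi k'.+1 hw.1) / T))) _.
  rewrite (@sumL_ext_in _ _ _ (fun hw => hw.2 + (- / T) * (hw.2 * INR (psi k'.+1 hw.1)))); last first.
    by move=> hw _; field; lra.
  rewrite sumL_add sumL_scal mass -/(Ex _ _).
  have : Ex k'.+1 n / T <= eps.
    apply: (Rmult_le_reg_r T) => //; rewrite /Rdiv Rmult_assoc Rinv_l; lra.
  rewrite /Rdiv; lra.
apply: sumL_le => [[h w] Hin]; simpl fst; simpl snd.
have [Hs I Hw _] := @supp _ _ _ Hin; rewrite /= in Hs I Hw.
apply: Rmult_le_compat_l => //.
exact: (good_indic _ _ _ _ _ Hs I HT HL).
Qed.

End RPart.

Theorem proposition5 (k : nat) (hk : (2 <= k)%N) :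
  exists C : R, (0 < C)%R /\
    forall eps : R, (0 < eps)%R ->
      exists N : nat, forall n : nat, (N <= n)%N ->
        (1 - eps <= ktree_prob k n
           (fun h => forall p : seq nat, birth_increasing_path k h p ->
              (INR (size p).-1 <= C * ln (INR n))%R))%R.
Proof. exact: proposition5_aux. Qed.
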